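(* Let $C=\{c_1,\dots,c_m\}$ and fix the axis $c_1\lhd\dots\lhd c_m$. For all $i,j\in[m]$, the probability that candidate $c_j$ appears in position $i$ in a vote sampled from the Walsh distribution $\mathcal{D}_{\mathrm{SP}}^{\mathrm{Wal}}$ is \[\frac{1}{2^{m-i+1}}\binom{m-i}{j-1}\mathbb{1}_{j\le m-i+1}+\frac{1}{2^{m-i+1}}\binom{m-i}{j-i}\mathbb{1}_{j>i-1}.\]
   Context: A vote over $C$ is a total order on $C$ (position 1 is the top). A vote is single-peaked with respect to the axis $c_1\lhd\dots\lhd c_m$ if for every $t\in[m]$ its $t$ top-ranked candidates form a set of consecutive candidates $\{c_a,c_{a+1},\dots,c_b\}$. The Walsh distribution $\mathcal{D}_{\mathrm{SP}}^{\mathrm{Wal}}$ assigns probability $1/2^{m-1}$ to each vote single-peaked with respect to this axis and probability $0$ to all other votes. $\mathbb{1}$ denotes an indicator. *)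

(* Defs.v *)
From mathcomp Require Import all_boot all_order all_algebra all_fingroup.
Set Implicit Arguments. Unset Strict Implicit. Unset Printing Implicit Defensive.
Import Order.TTheory GRing.Theory Num.Theory.

(* Candidates c_1..c_m are modelled as 'I_m (c_{k+1} <-> k), positions 1..m
   likewise (position p+1 <-> p).  A vote is a permutation v : {perm 'I_m},
   v p = candidate ranked at (0-indexed) position p.  The axis is the natural
   order c_1 < ... < c_m on 'I_m. *)

Definition vote (m : nat) := {perm 'I_m}.

Definition top_set (m : nat) (v : vote m) (t : nat) : {set 'I_m} :=
  [set v p | p : 'I_m & p < t].

Definition single_peaked (m : nat) (v : vote m) : bool :=
  [forall t : 'I_m.+1, (0 < t) ==>
     [exists a : 'I_m, exists b : 'I_m,
        top_set v t == [set c : 'I_m | (a <= c) && (c <= b)]]].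

Definition walsh (m : nat) (v : vote m) : rat :=
  if single_peaked v then (1 / (2 ^+ (m.-1)))%R else 0%R.

Definition at_position (m : nat) (v : vote m) (i j : nat) : bool :=
  [exists p : 'I_m, (p.+1 == i) && ((v p).+1 == j)].

Definition walsh_pos_prob (m i j : nat) : rat :=
  (\sum_(v : vote m | at_position v i j) walsh v)%R.

(* Main.v *)
Require Import Defs.
From mathcomp Require Import all_boot all_order all_algebra all_fingroup zify ring.
Set Implicit Arguments. Unset Strict Implicit. Unset Printing Implicit Defensive.
Import Order.TTheory GRing.Theory Num.Theory.

Definition convex n (S : {set 'I_n}) : bool :=
  [forall x in S, forall y in S, forall z : 'I_n, ((x <= z) && (z <= y))%N ==> (z \in S)].

Lemma memtop m (v : vote m) t c :
  reflect (exists2 p : 'I_m, (p < t)%N & c = v p) (c \in top_set v t).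
Proof.
apply: (iffP imsetP) => [[p]|[p]]; rewrite ?inE => Hp ->; exists p => //; by rewrite inE.
Qed.

Lemma convexP n (S : {set 'I_n}) :
  reflect (forall x y z : 'I_n, x \in S -> y \in S -> (x <= z)%N -> (z <= y)%N -> z \in S)
    (convex S).
Proof.
apply: (iffP forallP) => [H x y z xS yS xz zy | H x].
  by move: (H x); rewrite xS /= => /forallP/(_ y); rewrite yS /= => /forallP/(_ z); rewrite xz zy.
apply/implyP => xS; apply/forallP => y; apply/implyP => yS; apply/forallP => z.
by apply/implyP => /andP[]; apply: H.
Qed.

Lemma spP m (v : vote m) :
  reflect (forall t, (0 < t <= m)%N -> convex (top_set v t)) (single_peaked v).
Proof.
apply: (iffP forallP) => [H t /andP[t0 tm] | H t].
  move: (H (Ordinal (tm : t < m.+1))) => /= /implyP/(_ t0) /existsP[a] /existsP[b] /eqP ->.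
  apply/convexP => x y z; rewrite !inE => /andP[ax _] /andP[_ yb] xz zy.
  by rewrite (leq_trans ax xz) (leq_trans zy yb).
apply/implyP => t0.
have tm : (t <= m)%N by rewrite -ltnS.
have /convexP Hc := H t (introT andP (conj t0 tm)).
have m0 : (0 < m)%N by apply: leq_trans tm.
pose p0 : 'I_m := Ordinal m0.
have x0S : v p0 \in top_set v t by apply/memtop; exists p0.
case: (arg_minnP val x0S) => a aS amin.
case: (arg_maxnP val x0S) => b bS bmax.
apply/existsP; exists a; apply/existsP; exists b; apply/eqP/setP => c; rewrite inE.
apply/idP/idP => [cS|/andP[ac cb]]; first by rewrite amin // (bmax c cS : (c <= b)%N).
exact: Hc ac cb.
Qed.


Lemma top_full m (v : vote m) : top_set v m = setT.
Proof.
apply/setP => c; rewrite inE; apply/memtop; exists ((v^-1)%g c); first exact: ltn_ord.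
by rewrite permKV.
Qed.

Lemma convexT n : convex [set: 'I_n].
Proof. by apply/convexP => *; rewrite inE. Qed.

Lemma convex_shift n k d (S : {set 'I_n}) (T : {set 'I_k}) :
  (n + d <= k)%N ->
  (forall x : 'I_k, x \in T -> (d <= x < n + d)%N) ->
  (forall (x : 'I_k) (y : 'I_n), val x = (y + d)%N -> (x \in T) = (y \in S)) ->
  convex T = convex S.
Proof.
move=> nk HT HTS; apply/convexP/convexP => H.
  move=> x y z xS yS xz zy.
  have lt (u : 'I_n) : (u + d < k)%N.
    by have := ltn_ord u; lia.
  rewrite -(HTS (Ordinal (lt z))) //; apply: (H (Ordinal (lt x)) (Ordinal (lt y))) => /=.
  - by rewrite (HTS _ x).
  - by rewrite (HTS _ y).
  - lia.
  - lia.
move=> x y z xT yT xz zy.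
have /andP[dx _] := HT x xT; have /andP[_ yn] := HT y yT.
have zn : (z - d < n)%N by lia.
have xn : (x - d < n)%N by lia.
have yn' : (y - d < n)%N by lia.
rewrite (HTS _ (Ordinal zn)) /=; last by lia.
apply: (H (Ordinal xn) (Ordinal yn')) => /=.
- by rewrite -(HTS x) //=; lia.
- by rewrite -(HTS y) //=; lia.
- lia.
- lia.
Qed.

Lemma liftmaxE n (y : 'I_n) : val (lift (ord_max : 'I_n.+1) y) = y.
Proof. by rewrite /= /bump leqNgt ltn_ord. Qed.

Lemma lift0E n (y : 'I_n) : val (lift (ord0 : 'I_n.+1) y) = y.+1.
Proof. by rewrite /= /bump leq0n. Qed.

Section Lift.
Variables (m : nat) (s : 'S_m.+1) (j : 'I_m.+2) (d : nat).
Hypothesis Hd : forall y : 'I_m.+1, val (lift j y) = (y + d)%N.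
Hypothesis d1 : (d <= 1)%N.
Let V : vote m.+2 := lift_perm ord_max j s.

Lemma top_lift_mem t (x : 'I_m.+2) (y : 'I_m.+1) : (t <= m.+1)%N -> val x = (y + d)%N ->
  (x \in top_set V t) = (y \in top_set s t).
Proof.
move=> tm xy; apply/memtop/memtop => [[p pt xE]|[p pt yE]].
  have : ord_max != p by rewrite eq_sym -val_eqE /= neq_ltn (leq_trans pt tm).
  case/unlift_some => p' Ep _; rewrite xE Ep lift_perm_lift Hd in xy.
  exists p'; first by move: pt; rewrite Ep liftmaxE.
  by apply: val_inj; apply/eqP; rewrite -(eqn_add2r d) xy.
exists (lift ord_max p); first by rewrite liftmaxE.
by apply: val_inj; rewrite lift_perm_lift xy Hd yE.
Qed.

Lemma top_lift_bnd t (x : 'I_m.+2) : (t <= m.+1)%N -> x \in top_set V t -> (d <= x < m.+1 + d)%N.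
Proof.
move=> tm /memtop[p pt ->].
have : ord_max != p by rewrite eq_sym -val_eqE /= neq_ltn (leq_trans pt tm).
case/unlift_some => p' -> _; rewrite lift_perm_lift Hd leq_addl /=.
by rewrite ltn_add2r.
Qed.

Lemma sp_lift : single_peaked V = single_peaked s.
Proof.
apply/spP/spP => H t /andP[t0 tm].
  rewrite -(@convex_shift _ _ d _ (top_set V t)).
  - by apply: H; rewrite t0 (leq_trans tm).
  - by lia.
  - by move=> x; apply: top_lift_bnd.
  - by move=> x y; apply: top_lift_mem.
case: (ltngtP t m.+2) => [tm'|tm'|->]; [|by exfalso; lia|by rewrite top_full convexT].
rewrite (@convex_shift _ _ d (top_set s t)).
- by apply: H; rewrite t0.
- by lia.
- by move=> x; apply: top_lift_bnd.
- by move=> x y; apply: top_lift_mem.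
Qed.
End Lift.

Lemma sp_last m (V : vote m.+2) :
  single_peaked V -> (V ord_max = ord0) \/ (V ord_max = ord_max).
Proof.
move=> /spP H; set c := V ord_max.
have Hc : convex (top_set V m.+1) by apply: (H m.+1); rewrite /= leqnSn.
have inT x : x != c -> x \in top_set V m.+1.
  move=> xc; apply/memtop; exists ((V^-1)%g x); last by rewrite permKV.
  have : (V^-1)%g x != ord_max.
    by apply: contra xc => /eqP E; rewrite /c -E permKV.
  rewrite -val_eqE /= => ne; have := ltn_ord ((V^-1)%g x); move: ne.
  move: (val _) => k; lia.
have notT : c \notin top_set V m.+1.
  apply/memtop => -[p pt /perm_inj pE].
  by move: pt; rewrite -pE /= ltnn.
case: (eqVneq c ord0) => [->|c0]; first by left.
case: (eqVneq c ord_max) => [->|cm]; first by right.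
exfalso; move/negP: notT; apply.
have h0 : (ord0 : 'I_m.+2) \in top_set V m.+1 by apply: inT; rewrite eq_sym.
have h1 : (ord_max : 'I_m.+2) \in top_set V m.+1 by apply: inT; rewrite eq_sym.
move/convexP: Hc => Hc; apply: (Hc _ _ _ h0 h1) => //.
by rewrite -ltnS ltn_ord.
Qed.

Lemma reindex_lift n (i j : 'I_n.+1) (Q : 'S_n.+1 -> bool) :
  (\sum_(v : 'S_n.+1 | Q v && (v i == j)) 1 = \sum_(s : 'S_n | Q (lift_perm i j s)) 1)%N.
Proof.
rewrite (reindex (lift_perm i j)); last first.
  pose ulsf (a : 'I_n.+1) (s : 'S_n.+1) k := odflt k (unlift (s a) (s (lift a k))).
  have ulsfK a (s : 'S_n.+1) k: lift (s a) (ulsf a s k) = s (lift a k).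
    rewrite /ulsf; have:= neq_lift a k.
    by rewrite -(can_eq (permK s)) => /unlift_some[] ? ? ->.
  have inj_ulsf: injective (ulsf i _).
    move=> s; apply: can_inj (ulsf (s i) (s^-1)%g) _ => k'.
    by rewrite {1}/ulsf ulsfK !permK liftK.
  exists (fun s => perm (inj_ulsf s)) => [s _ | s].
    by apply/permP=> k'; rewrite permE /ulsf lift_perm_lift lift_perm_id liftK.
  rewrite inE => /andP[_ /(s _ =P _) si0]; apply/permP=> k.
  case: (unliftP i k) => [k'|] ->; rewrite ?lift_perm_id //.
  by rewrite lift_perm_lift -si0 permE ulsfK.
by apply: eq_bigl => s; rewrite lift_perm_id eqxx andbT.
Qed.

Lemma decomp m (P : vote m.+2 -> bool) :
  (\sum_(v : vote m.+2 | single_peaked v && P v) 1 =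
   \sum_(s : 'S_m.+1 | single_peaked s && P (lift_perm ord_max ord_max s)) 1 +
   \sum_(s : 'S_m.+1 | single_peaked s && P (lift_perm ord_max ord0 s)) 1)%N.
Proof.
rewrite (bigID (fun v : vote m.+2 => v ord_max == ord_max)) /=.
rewrite [X in (_ + X)%N](bigID (fun v : vote m.+2 => v ord_max == ord0)) /=.
rewrite [X in (_ + (_ + X))%N]big_pred0; last first.
  move=> v; apply/negP => /andP[/andP[/andP[spv _] n1] n2].
  by case: (sp_last spv) => /eqP; rewrite ?(negbTE n1) ?(negbTE n2).
rewrite addn0 reindex_lift.
rewrite (@reindex_lift _ _ _ (fun v : vote m.+2 => (single_peaked v && P v) && (v ord_max != ord_max))).
congr (_ + _); apply: eq_bigl => s.
  by rewrite (@sp_lift m s ord_max 0) // => y; rewrite liftmaxE addn0.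
rewrite (@sp_lift m s ord0 1) //; last by move=> y; rewrite lift0E addn1.
by rewrite lift_perm_id -val_eqE /= andbT.
Qed.

Definition cnt m i j := (\sum_(v : vote m | single_peaked v && at_position v i j) 1)%N.
Definition tot m := (\sum_(v : vote m | single_peaked v && true) 1)%N.

Lemma at_lift m (s : 'S_m.+1) (k : 'I_m.+2) d i j :
  (forall y : 'I_m.+1, val (lift k y) = (y + d)%N) -> (i <= m.+1)%N ->
  at_position (lift_perm ord_max k s : vote m.+2) i (j + d) = at_position s i j.
Proof.
move=> Hd im; apply/existsP/existsP => [[p /andP[pi vj]]|[p /andP[pi vj]]].
  have : ord_max != p by rewrite eq_sym -val_eqE /= neq_ltn -ltnS (eqP pi) ltnS im.
  case/unlift_some => p' Ep _; move: pi vj; rewrite Ep lift_perm_lift Hd liftmaxE.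
  move=> pi vj; exists p'; rewrite pi /=; lia.
exists (lift ord_max p); rewrite lift_perm_lift Hd liftmaxE pi /=; lia.
Qed.

Lemma at_last m (v : vote m.+1) j : at_position v m.+1 j = ((v ord_max).+1 == j).
Proof.
apply/existsP/idP => [[p /andP[/eqP [pm] vj]]|vj].
  have E : p = ord_max by apply: val_inj.
  by rewrite -E.
by exists ord_max; rewrite eqxx.
Qed.

Lemma sum_const_b m (b : bool) :
  (\sum_(s : vote m | single_peaked s && b) 1 = b * tot m)%N.
Proof. by case: b; rewrite ?mul1n // big_pred0 // => s; rewrite andbF. Qed.

Lemma R1 m i j : (i <= m.+1)%N -> cnt m.+2 i j.+1 = (cnt m.+1 i j.+1 + cnt m.+1 i j)%N.
Proof.
move=> im; rewrite /cnt decomp; congr (_ + _); apply: eq_bigl => s.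
  rewrite -{1}[j.+1]addn0 (@at_lift m s ord_max 0) // => y; by rewrite liftmaxE addn0.
by rewrite -[j.+1]addn1 (@at_lift m s ord0 1) // => y; rewrite lift0E addn1.
Qed.

Lemma R2 m j : cnt m.+2 m.+2 j = ((j == m.+2) * tot m.+1 + (j == 1) * tot m.+1)%N.
Proof.
rewrite /cnt decomp -!sum_const_b; congr (_ + _); apply: eq_bigl => s.
  by rewrite (@at_last m.+1) lift_perm_id eq_sym.
by rewrite (@at_last m.+1) lift_perm_id eq_sym.
Qed.

Lemma R3 m : tot m.+2 = (2 * tot m.+1)%N.
Proof. by rewrite /tot decomp addnn mul2n. Qed.

Lemma sp1 (v : vote 1) : single_peaked v.
Proof.
apply/spP => t /andP[t0 t1]; have -> : t = 1%N by apply/eqP; rewrite eqn_leq t1.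
by rewrite top_full convexT.
Qed.

Lemma tot1 : tot 1 = 1%N.
Proof.
rewrite /tot (eq_bigl xpredT) ?sum1_card ?card_Sn // => v; by rewrite sp1.
Qed.

Lemma totE m : tot m.+1 = (2 ^ m)%N.
Proof. by elim: m => [|m IH]; rewrite ?tot1 // R3 IH expnS. Qed.

Lemma cnt1 j : cnt 1 1 j = (j == 1)%N.
Proof.
rewrite /cnt (eq_bigl (fun v : vote 1 => single_peaked v && (j == 1))).
  by rewrite sum_const_b tot1 muln1.
move=> v; rewrite at_last; congr (_ && _).
by have -> : v ord_max = ord0 by apply: val_inj; case: (v ord_max) => [[]].
Qed.

Lemma cnt0 m i : cnt m i 0 = 0%N.
Proof. by rewrite /cnt big_pred0 // => v; apply/negP => /andP[_ /existsP[p /andP[]]]. Qed.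

Lemma cntE n i j : (1 <= i <= n)%N -> (1 <= j)%N ->
  (2 * cnt n i j = 2 ^ (i - 1) * ('C(n - i, j - 1) + (i <= j) * 'C(n - i, j - i)))%N.
Proof.
elim: n i j => [|[|m] IH] i j; first by case/andP => /leq_trans H /H.
  case/andP=> i1 i1' j1; have -> : i = 1%N by apply/eqP; rewrite eqn_leq i1 i1'.
  rewrite cnt1 subnn expn0 mul1n j1 mul1n /= bin0n.
  by case: j j1 => [|[|j]] //.
case/andP=> i1 im j1.
case: (ltngtP i m.+2) => [ilt|ilt|->]; [ | by exfalso; lia | ].
2: { rewrite R2 totE subnn subn1 /= !bin0n.
  rewrite expnS -mulnA -mulnDl; congr (2 * _)%N; rewrite mulnC; congr (_ * _)%N.
  case: j j1 => [|[|j]] _ //=.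
  rewrite add0n addn0 !eqSS !subSS ltnS subn_eq0.
  case: (ltngtP j m) => h.
  - by rewrite ltnS leqNgt h.
  - by rewrite muln0.
  - by rewrite h ltnSn. }
rewrite ltnS in ilt.
case: j j1 => [//|j] _.
rewrite R1 // mulnDr (IH i j.+1); [|by rewrite i1|by []].
have Hn : (m.+2 - i = (m.+1 - i).+1)%N by lia.
rewrite Hn; set n' := (m.+1 - i)%N.
case: j => [|j].
  have Hi : (1 - i = 0)%N by lia.
  by rewrite cnt0 muln0 addn0 Hi !bin0.
rewrite (IH i j.+1); [|by rewrite i1|by []].
rewrite -mulnDr; congr (_ * _)%N.
rewrite !subn1 /= binS.
rewrite -/n' -!addnA; congr (_ + _)%N; rewrite addnCA; congr (_ + _)%N.
case: (ltngtP i j.+2) => h.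
- have h' : (i <= j.+1)%N by rewrite -ltnS.
  by rewrite h' !mul1n (subSn h') binS.
- by rewrite leqNgt (ltn_trans (ltnSn _) h).
- by rewrite h ltnn subnn !bin0.
Qed.

Local Open Scope ring_scope.

Theorem corollary1 (m i j : nat) (Hi : (1 <= i <= m)%N) (Hj : (1 <= j <= m)%N) :
  walsh_pos_prob m i j =
    1 / (2 ^+ (m - i + 1)) * ('C(m - i, j - 1))%:R * ((j <= m - i + 1)%N)%:R
  + 1 / (2 ^+ (m - i + 1)) * ('C(m - i, j - i))%:R * ((j > i - 1)%N)%:R.
Proof.
have [i1 im] := andP Hi; have [j1 jm] := andP Hj.
have H := cntE Hi j1.
have -> : walsh_pos_prob m i j = (cnt m i j)%:R * (1 / 2 ^+ m.-1) :> rat.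
  rewrite /walsh_pos_prob /cnt (bigID (fun v : vote m => single_peaked v)) /=.
  rewrite [X in _ + X = _]big1 ?addr0; last by move=> v /andP[_ /negbTE nsp]; rewrite /walsh nsp.
  rewrite natr_sum mulr_suml.
  rewrite (eq_bigl (fun v : vote m => single_peaked v && at_position v i j)); last by move=> v; rewrite andbC.
  apply: eq_bigr => v /andP[spv _].
  by rewrite /walsh spv [RHS]mul1r.
have E1 : ('C(m - i, j - 1) * (j <= m - i + 1) = 'C(m - i, j - 1))%N.
  case: (leqP j (m - i + 1)) => h; first by rewrite muln1.
  by rewrite muln0 bin_small //; rewrite addn1 in h; rewrite -ltnS; case: j h {Hj j1 jm H} => [|j] //=; rewrite subn1.
have E2 : (i - 1 < j)%N = (i <= j)%N by case: (i) i1 => // k _; rewrite subn1.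
transitivity ((('C(m - i, j - 1) * (j <= m - i + 1)) + ('C(m - i, j - i) * (i - 1 < j)))%N%:R / 2 ^+ (m - i + 1) : rat); last first.
  by rewrite natrD !natrM mulrDl !mul1r; congr (_ + _); rewrite mulrC !mulrA.
rewrite E1 E2.
set S := ('C(m - i, j - 1) + _)%N.
have e1 : (cnt m i j)%:R * 2 = 2 ^+ (i - 1) * S%:R :> rat.
  have := congr1 (fun x => x%:R : rat) H; rewrite /= !natrM (natrX _ 2 (i - 1)) => E.
  by rewrite mulrC E /S [X in (_ + X)%N]mulnC.
have e2 : (2 ^+ (i - 1) * 2 ^+ (m - i + 1) = 2 * 2 ^+ m.-1 :> rat).
  rewrite -exprD -exprS; congr (_ ^+ _); lia.
have n2 : (2 : rat) != 0 by [].
have nb : (2 ^+ (m - i + 1) : rat) != 0 by rewrite expf_neq0.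
have na : (2 ^+ (i - 1) : rat) != 0 by rewrite expf_neq0.
have nc : (2 ^+ m.-1 : rat) != 0 by rewrite expf_neq0.
have -> : (cnt m i j)%:R = 2 ^+ (i - 1) * S%:R / 2 :> rat by rewrite -e1 mulfK.
have -> : (2 ^+ m.-1 : rat) = 2 ^+ (i - 1) * 2 ^+ (m - i + 1) / 2 by rewrite e2 [RHS]mulrC mulKf.
by field; rewrite na nb.
Qed.
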